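(* Let $T\subseteq\mathbb{N}$ be a $\neg\neg$-stable subset and $f:T\to\mathcal{L}(\mathbb{N})$ a map. Then there is a map $\bar f:\mathbb{N}\to\mathcal{L}(\mathbb{N})$ extending $f$, i.e. $\bar f(m)=f(m)$ for all $m\in T$.
   Context: We work constructively, in higher-order intuitionistic logic with Dependent Choice, together with the Stable Subspace Axiom: for every $\neg\neg$-stable $X\subseteq\mathbb{N}$, the restriction map $\Sigma^{\mathbb{N}}\to\Sigma^X$, $V\mapsto V\cap X$, is surjective. The axioms Markov principle and Enumerability ($\mathbb{N}\to\Sigma^{\mathbb{N}}$ surjective) are also assumed throughout. $\Sigma=\{p\in\Omega\mid\exists f\in2^{\mathbb{N}}(p\Leftrightarrow\exists n\,f(n)=1)\}$. A subset $T$ is $\neg\neg$-stable if $\neg\neg(m\in T)\Rightarrow m\in T$. The semidecidable lifting of a set $Y$ is $\mathcal{L}(Y)=\{S\subseteq Y\mid \forall y,y'\in S\,(y=y') \text{ and } (\exists y\in Y\,y\in S)\in\Sigma\}$, the set of partial values with semidecidable definedness. *)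

(* Defs.v *)
Definition Sig (p : Prop) : Prop :=
  exists f : nat -> bool, (p <-> exists n, f n = true).

(* A subset of N is a predicate; V : nat -> Prop is an element of Sigma^N
   when every membership proposition is in Sigma. *)
Definition SigSubset (V : nat -> Prop) : Prop := forall n, Sig (V n).

Definition nn_stable (T : nat -> Prop) : Prop :=
  forall m, ~ ~ T m -> T m.

(* The semidecidable lifting L(N): S subset N is a subsingleton with
   semidecidable inhabitedness. *)
Definition in_lift (S : nat -> Prop) : Prop :=
  (forall y y', S y -> S y' -> y = y') /\ Sig (exists y, S y).

(* Standing axioms, stated as predicates so they can be assumed as
   hypotheses of the theorem. *)

Definition DependentChoice : Prop :=
  forall (A : Type) (R : A -> A -> Prop),
    (forall x, exists y, R x y) ->
    forall x0 : A, exists g : nat -> A, g 0 = x0 /\ forall n, R (g n) (g (S n)).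

Definition MarkovPrinciple : Prop :=
  forall f : nat -> bool, ~ ~ (exists n, f n = true) -> exists n, f n = true.

(* Enumerability: N -> Sigma^N is surjective (equality in Sigma^N is
   extensional). *)
Definition Enumerability : Prop :=
  exists e : nat -> nat -> Prop,
    (forall k, SigSubset (e k)) /\
    forall V, SigSubset V -> exists k, forall n, e k n <-> V n.

Definition StableSubspaceAxiom : Prop :=
  forall X : nat -> Prop, nn_stable X ->
    forall W : {x : nat | X x} -> Prop,
      (forall x, Sig (W x)) ->
      exists V : nat -> Prop, SigSubset V /\
        forall x : {x : nat | X x}, V (proj1_sig x) <-> W x.

(* Main.v *)
Require Import Defs.
From Stdlib Require Import Arith Bool Cantor Lia.

Lemma CC_of_DC (DC : DependentChoice) (A : Type) (P : nat -> A -> Prop) :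
  (forall n, exists a, P n a) -> exists g : nat -> A, forall n, P n (g n).
Proof.
  intros H. destruct (H 0) as [a0 _].
  destruct (DC (nat * A)%type (fun p q => fst q = S (fst p) /\ P (fst p) (snd q))
              (fun p => match H (fst p) with ex_intro _ a Ha => ex_intro _ (S (fst p), a) (conj eq_refl Ha) end)
              (0, a0)) as [g [g0 gS]].
  assert (Hf : forall n, fst (g n) = n).
  { induction n. rewrite g0; reflexivity. destruct (gS n) as [e _]. rewrite e, IHn; reflexivity. }
  exists (fun n => snd (g (S n))). intros n. destruct (gS n) as [_ p]. rewrite Hf in p. exact p.
Qed.

Lemma lift_sig (DC : DependentChoice) (S : nat -> Prop) : in_lift S -> forall y, Sig (S y).
Proof.
  intros [Hu [fS HfS]] y.
  assert (H : forall n, exists z, fS n = true -> S z).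
  { intros n. destruct (fS n) eqn:E.
    - destruct (proj2 HfS (ex_intro _ n E)) as [z Hz]. exists z; auto.
    - exists 0; discriminate. }
  destruct (CC_of_DC DC _ _ H) as [g Hg].
  exists (fun n => fS n && Nat.eqb (g n) y). split.
  - intros Sy. destruct (proj1 HfS (ex_intro _ y Sy)) as [n Hn]. exists n.
    rewrite Hn. simpl. apply Nat.eqb_eq. apply (Hu _ _ (Hg n Hn) Sy).
  - intros [n Hn]. apply andb_prop in Hn. destruct Hn as [H1 H2].
    apply Nat.eqb_eq in H2. subst y. apply Hg; exact H1.
Qed.

Lemma minimize (p : nat -> bool) : (exists k, p k = true) ->
  exists k, p k = true /\ forall k', k' < k -> p k' = false.
Proof.
  intros [k Hk].
  assert (G : forall N, forall k, k <= N -> p k = true ->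
            exists k, p k = true /\ forall k', k' < k -> p k' = false).
  { induction N; intros j Hj Hp.
    - exists j; split; auto. intros; lia.
    - destruct (p j) eqn:E; [|discriminate].
      destruct (Nat.eq_dec j 0) as [->|nz].
      + exists 0; split; auto; intros; lia.
      +
        assert (D : (exists i, i < j /\ p i = true) \/ (forall i, i < j -> p i = false)).
        { clear. induction j. right; intros; lia.
          destruct IHj as [[i [Hi Hp]]|Hn].
          - left; exists i; split; [lia|auto].
          - destruct (p j) eqn:E. left; exists j; split; [lia|auto].
            right; intros i Hi. destruct (Nat.eq_dec i j) as [->|]; [auto|apply Hn; lia]. }
        destruct D as [[i [Hi Hpi]]|Hn].
        * apply (IHN i); [lia|auto].
        * exists j; split; auto. }
  exact (G k k (le_n k) Hk).
Qed.

Theorem proposition4p1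
  (DC : DependentChoice) (MP : MarkovPrinciple) (EN : Enumerability)
  (SSA : StableSubspaceAxiom)
  (T : nat -> Prop) (hT : nn_stable T)
  (f : {m : nat | T m} -> nat -> Prop)
  (hf : forall x, in_lift (f x))
  (hf_resp : forall m (h h' : T m) y,
      f (exist _ m h) y <-> f (exist _ m h') y) :
  exists fbar : nat -> nat -> Prop,
    (forall m, in_lift (fbar m)) /\
    forall x : {m : nat | T m}, forall y, fbar (proj1_sig x) y <-> f x y.
Proof.
  assert (fresp : forall m m' (e : m = m') h h' y,
             f (exist _ m h) y <-> f (exist _ m' h') y).
  { intros m m' e. subst m'. apply hf_resp. }
  set (X := fun k => T (fst (of_nat k))).
  assert (hX : nn_stable X) by (intros k Hk; apply hT; exact Hk).
  set (W := fun x : {k | X k} => f (exist _ (fst (of_nat (proj1_sig x))) (proj2_sig x))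
                                   (snd (of_nat (proj1_sig x)))).
  assert (hW : forall x, Sig (W x)) by (intros x; apply lift_sig; auto).
  destruct (SSA X hX W hW) as [V [HVs HV]].
  destruct (CC_of_DC DC _ (fun k (h : nat -> bool) => V k <-> exists n, h n = true) HVs) as [h Hh].
  set (hit := fun m k => h (to_nat (m, fst (of_nat k))) (snd (of_nat k))).
  assert (Vf : forall m (hm : T m) y, V (to_nat (m, y)) <-> f (exist _ m hm) y).
  { intros m hm y.
    assert (hx : X (to_nat (m, y))) by (unfold X; rewrite cancel_of_to; exact hm).
    rewrite (HV (exist _ (to_nat (m,y)) hx)). unfold W; cbn [proj1_sig proj2_sig].
    generalize (cancel_of_to (m, y)). generalize hx. unfold X.
    generalize (of_nat (to_nat (m, y))). intros p hp ->. cbn [fst snd] in *. apply hf_resp. }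
  exists (fun m y => exists k, hit m k = true /\ fst (of_nat k) = y /\
                          forall k', k' < k -> hit m k' = false).
  split.
  - intros m. split.
    + intros y y' [k [H1 [H2 H3]]] [k' [H1' [H2' H3']]].
      subst. destruct (Nat.lt_total k k') as [l|[e|l]].
      * rewrite (H3' _ l) in H1; discriminate.
      * subst; reflexivity.
      * rewrite (H3 _ l) in H1'; discriminate.
    + exists (hit m). split.
      * intros [y [k [H1 _]]]. exists k; exact H1.
      * intros E. destruct (minimize _ E) as [k [H1 H2]].
        exists (fst (of_nat k)), k; auto.
  - intros [m hm] y; simpl. split.
    + intros [k [H1 [H2 _]]]. apply (Vf m hm). subst y.
      apply Hh. exists (snd (of_nat k)). exact H1.
    + intros Hf.
      assert (E : exists k, hit m k = true).
      { destruct (proj1 (Hh _) (proj2 (Vf m hm y) Hf)) as [n Hn].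
        exists (to_nat (y, n)). unfold hit. rewrite cancel_of_to. exact Hn. }
      destruct (minimize _ E) as [k [H1 H2]].
      exists k. split; [exact H1|split; [|exact H2]].
      assert (Hv : V (to_nat (m, fst (of_nat k)))) by (apply Hh; exists (snd (of_nat k)); exact H1).
      apply (Vf m hm) in Hv.
      destruct (hf (exist _ m hm)) as [Hu _]. apply (Hu _ _ Hv Hf).
Qed.
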